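(* Let $d\ge 10$ and $a>0$, and let $u=u(a,\cdot)$ be the solution of $$y^{2}(1-y^{2})u''+\big((d-3)y-2y^{3}\big)u'+(d-2)u(1-u^{2})=0$$ with $u(y)=1-ay^{2}+O(y^{4})$ as $y\to0$. Then $u$ is monotone decreasing on $[0,1]$, from $u(0)=1$ to $u(1)>0$, where $u(1):=\lim_{y\to1^-}u(y)$.
   Context: For each $a\ge0$ there is a unique solution $u(a,y)$ of the equation, analytic in $(a,y)$ near $y=0$, with expansion $u(a,y)=1-ay^2+O(y^4)$ near $y=0$. This solution extends to a solution on $[0,1)$ with $|u|<1$ for $a>0$, and the limits $\lim_{y\to1^-}u(a,y)$ and $\lim_{y\to1^-}u'(a,y)$ exist and are finite; $u(1)$ and $u'(1)$ denote these limits. *)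

(* Defs.v *)
From Stdlib Require Import Reals.
From Coquelicot Require Import Coquelicot.
Open Scope R_scope.

Definition ode_at (d : R) (u : R -> R) (y : R) : Prop :=
  y ^ 2 * (1 - y ^ 2) * Derive (Derive u) y
  + ((d - 3) * y - 2 * y ^ 3) * Derive u y
  + (d - 2) * u y * (1 - u y ^ 2) = 0.

Definition is_sol (d a : R) (u : R -> R) : Prop :=
  (forall y, 0 < y < 1 -> ex_derive u y) /\
  (forall y, 0 < y < 1 -> ex_derive (Derive u) y) /\
  (forall y, 0 < y < 1 -> ode_at d u y) /\
  u 0 = 1 /\
  (exists C delta, 0 < delta /\
     forall y, 0 < y < delta -> Rabs (u y - (1 - a * y ^ 2)) <= C * y ^ 4).

(* Main.v *)
Require Import Defs.
From Stdlib Require Import Reals Lra Psatz Classical.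
From Coquelicot Require Import Coquelicot.
Open Scope R_scope.

Lemma incr (f df : R -> R) a b : a < b ->
  (forall x, a < x < b -> is_derive f x (df x)) ->
  (forall x, a <= x <= b -> continuity_pt f x) ->
  (forall x, a < x < b -> 0 < df x) -> f a < f b.
Proof.
  intros Hab Hd Hc Hp.
  assert (pr1 : forall c, a < c < b -> derivable_pt f c).
  { intros c P. exists (df c). apply is_derive_Reals, Hd, P. }
  assert (pr2 : forall c, a < c < b -> derivable_pt id c).
  { intros c P. apply derivable_pt_id. }
  destruct (MVT f id a b pr1 pr2 Hab Hc) as [c [P HP]].
  { intros; apply derivable_continuous_pt, derivable_pt_id. }
  rewrite (derive_pt_eq_0 f c (df c) (pr1 c P)) in HP.
  2: apply is_derive_Reals, Hd, P.
  rewrite (derive_pt_eq_0 id c 1 (pr2 c P)) in HP.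
  2: apply derivable_pt_lim_id.
  unfold id in HP. specialize (Hp c P). nra.
Qed.

Lemma is_derive_mult' (f g : R -> R) x df dg :
  is_derive f x df -> is_derive g x dg ->
  is_derive (fun t => f t * g t) x (df * g x + f x * dg).
Proof.
  intros H1 H2. apply (is_derive_mult f g x df dg H1 H2).
  intros; apply Rmult_comm.
Qed.

Definition Ef (m n : nat) (y : R) := y ^ m / sqrt (1 - y ^ 2) ^ n.

Lemma pred_pow k x : x <> 0 -> INR k * x ^ Init.Nat.pred k = INR k * x ^ k / x.
Proof. intros Hx. destruct k; simpl. field; auto. field; auto. Qed.

Lemma Ef_pos m n y : 0 < y < 1 -> 0 < Ef m n y.
Proof.
  intros Hy. unfold Ef. apply Rdiv_lt_0_compat.
  apply pow_lt; lra. apply pow_lt, sqrt_lt_R0; nra.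
Qed.

Lemma Ef_deriv m n y : 0 < y < 1 ->
  is_derive (Ef m n) y (Ef m n y * (INR m / y + INR n * y / (1 - y ^ 2))).
Proof.
  intros Hy. unfold Ef. auto_derive.
  - repeat split; try nra. apply pow_nonzero. apply Rgt_not_eq, sqrt_lt_R0. nra.
  - replace (1 + - (y * (y * 1))) with (1 - y ^ 2) by ring.
    assert (Hs : 0 < sqrt (1 - y ^ 2)) by (apply sqrt_lt_R0; nra).
    assert (Hss : sqrt (1 - y ^ 2) * sqrt (1 - y ^ 2) = 1 - y ^ 2)
      by (apply sqrt_sqrt; nra).
    set (s := sqrt (1 - y ^ 2)) in *.
    rewrite !pred_pow by lra.
    rewrite <- Hss.
    assert (0 < s ^ n) by (apply pow_lt; lra).
    field. repeat split; lra.
Qed.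

Lemma cont_of f y l : is_derive f y l -> continuity_pt f y.
Proof.
  intros H. apply derivable_continuous_pt. exists l. apply is_derive_Reals, H.
Qed.

Lemma Dg_lem (u : R -> R) y : 
  is_derive u y (Derive u y) -> is_derive (Derive u) y (Derive (Derive u) y) ->
  is_derive (fun y => y * Derive u y + 2 * u y) y (y * Derive (Derive u) y + 3 * Derive u y).
Proof.
  intros H1 H2. auto_derive.
  - split; [exists (Derive (Derive u) y); exact H2|]. split; auto. exists (Derive u y); exact H1.
  - change (fun x => Derive u x) with (Derive u). change (fun x => u x) with u. ring.
Qed.

Lemma GA (d : nat) a (u : R -> R) C del : (10 <= d)%nat -> 0 < a -> 0 < del ->
 (forall y, 0 < y < del -> Rabs (u y - (1 - a * y ^ 2)) <= C * y ^ 4) ->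
 (forall y, 0 < y < 1 -> is_derive u y (Derive u y)) ->
 (forall y, 0 < y < 1 -> is_derive (Derive u) y (Derive (Derive u) y)) ->
 (forall y, 0 < y < 1 -> ode_at (INR d) u y) ->
 forall y2, 0 < y2 < 1 -> (forall y, 0 < y <= y2 -> 0 < u y) ->
 0 < y2 * Derive u y2 + 2 * u y2.
Proof.
  intros Hd Ha Hdel Has Du Du1 Hode y2 Hy2 Hpos.
  assert (HD : 10 <= INR d) by (apply (le_INR 10 d) in Hd; simpl in Hd; lra).
  destruct (Rlt_or_le 0 (y2 * Derive u y2 + 2 * u y2)) as [ok|Hneg]; auto. exfalso.
  set (g := fun y => y * Derive u y + 2 * u y).
  set (F := fun y => Ef (d - 6) (d - 5) y * g y).
  assert (Hm : INR (d - 6) = INR d - 6) by (rewrite minus_INR; [simpl; ring | lia]).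
  assert (Hn : INR (d - 5) = INR d - 5) by (rewrite minus_INR; [simpl; ring | lia]).
  assert (DF : forall y, 0 < y < 1 -> is_derive F y
     (Ef (d-6) (d-5) y * (INR (d-6) / y + INR (d-5) * y / (1 - y ^ 2)) * g y +
      Ef (d-6) (d-5) y * (y * Derive (Derive u) y + 3 * Derive u y))).
  { intros y Hy. apply is_derive_mult'. apply Ef_deriv; auto. apply Dg_lem; auto. }
  assert (PF : forall y, 0 < y <= y2 ->
     0 < Ef (d-6) (d-5) y * (INR (d-6) / y + INR (d-5) * y / (1 - y ^ 2)) * g y +
      Ef (d-6) (d-5) y * (y * Derive (Derive u) y + 3 * Derive u y)).
  { intros y Hy. assert (Hy1 : 0 < y < 1) by lra.
    pose proof (Ef_pos (d-6) (d-5) y Hy1) as HE.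
    pose proof (Hode y Hy1) as Ho. unfold ode_at in Ho.
    pose proof (Hpos y Hy) as Hu.
    rewrite Hm, Hn. unfold g.
    set (E := Ef (d-6) (d-5) y) in *.
    set (u0 := u y) in *. set (u1 := Derive u y) in *. set (u2 := Derive (Derive u) y) in *.
    set (D := INR d) in *.
    assert (Hid : (D - 6) / y * (y * u1 + 2 * u0) + (D - 5) * y / (1 - y ^ 2) * (y * u1 + 2 * u0)
       + (y * u2 + 3 * u1) =
       (y ^ 2 * (1 - y ^ 2) * u2 + ((D - 3) * y - 2 * y ^ 3) * u1 + (D - 2) * u0 * (1 - u0 ^ 2)
        + u0 * ((D - 10) + 2 * y ^ 2 + (D - 2) * u0 ^ 2)) / (y * (1 - y ^ 2))).
    { field. split; nra. }
    assert (Hsrc : 0 < u0 * ((D - 10) + 2 * y ^ 2 + (D - 2) * u0 ^ 2)).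
    { apply Rmult_lt_0_compat; auto. nra. }
    rewrite Ho, Rplus_0_l in Hid.
    assert (0 < u0 * (D - 10 + 2 * y ^ 2 + (D - 2) * u0 ^ 2) / (y * (1 - y ^ 2))).
    { apply Rdiv_lt_0_compat; auto. nra. }
    replace (E * ((D - 6) / y + (D - 5) * y / (1 - y ^ 2)) * (y * u1 + 2 * u0) +
      E * (y * u2 + 3 * u1)) with
      (E * ((D - 6) / y * (y * u1 + 2 * u0) + (D - 5) * y / (1 - y ^ 2) * (y * u1 + 2 * u0)
       + (y * u2 + 3 * u1))) by (field; split; nra).
    rewrite Hid. apply Rmult_lt_0_compat; auto. }
  assert (Gneg : forall y, 0 < y < y2 -> g y < 0).
  { intros y Hy.
    assert (F y < F y2).
    { apply (incr F (fun y => Ef (d-6) (d-5) y * (INR (d-6) / y + INR (d-5) * y / (1 - y ^ 2)) * g y +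
      Ef (d-6) (d-5) y * (y * Derive (Derive u) y + 3 * Derive u y)) y y2); try lra.
      - intros x Hx. apply DF. lra.
      - intros x Hx. eapply cont_of. apply DF. lra.
      - intros x Hx. apply PF. lra. }
    assert (HE := Ef_pos (d-6) (d-5) y2 ltac:(lra)).
    assert (HE' := Ef_pos (d-6) (d-5) y ltac:(lra)).
    unfold F in H. unfold g in Hneg. fold (g y2) in Hneg. nra. }
  set (h := fun y => - (y ^ 2 * u y)).
  assert (Dh : forall y, 0 < y < 1 -> is_derive h y (- (y * g y))).
  { intros y Hy. unfold h, g. auto_derive.
    - exists (Derive u y). apply Du; auto.
    - change (fun x => u x) with u. ring. }
  assert (Hh : forall y, 0 < y < y2 -> y2 ^ 2 * u y2 < y ^ 2 * u y).
  { intros y Hy.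
    assert (h y < h y2).
    { apply (incr h (fun y => - (y * g y)) y y2); try lra.
      - intros x Hx. apply Dh. lra.
      - intros x Hx. eapply cont_of. apply Dh. lra.
      - intros x Hx. assert (g x < 0) by (apply Gneg; lra). nra. }
    unfold h in H. lra. }
  assert (Hp2 : 0 < y2 ^ 2 * u y2).
  { apply Rmult_lt_0_compat. nra. apply Hpos; lra. }
  set (t := y2 ^ 2 * u y2 / (2 * (1 + Rabs C))).
  assert (Ht : 0 < t) by (apply Rdiv_lt_0_compat; auto; pose proof (Rabs_pos C); lra).
  set (y := Rmin (Rmin (y2 / 2) (del / 2)) (Rmin t (1/2))).
  assert (Hy0 : 0 < y).
  { unfold y. repeat apply Rmin_glb_lt; lra. }
  assert (Hy1 : y <= y2 / 2) by (unfold y; eapply Rle_trans; apply Rmin_l).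
  assert (Hy3 : y <= del / 2) by (unfold y; eapply Rle_trans; [apply Rmin_l| apply Rmin_r]).
  assert (Hy4 : y <= t) by (unfold y; eapply Rle_trans; [apply Rmin_r| apply Rmin_l]).
  assert (Hy5 : y <= 1/2) by (unfold y; eapply Rle_trans; apply Rmin_r).
  specialize (Hh y ltac:(lra)).
  specialize (Has y ltac:(lra)).
  apply Rabs_le_between in Has.
  assert (HC := Rle_abs C).
  assert (Huy : u y <= 1 + Rabs C).
  { assert (C * y ^ 4 <= Rabs C).
    { assert (0 <= y ^ 4 <= 1) by (split; [apply pow_le; lra | assert (y * y <= 1) by nra; simpl; nra]).
      pose proof (Rabs_pos C). nra. }
    nra. }
  assert (y ^ 2 <= t) by nra.
  assert (t * (2 * (1 + Rabs C)) = y2 ^ 2 * u y2).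
  { unfold t. field. pose proof (Rabs_pos C); lra. }
  assert (y ^ 2 * u y <= t * (1 + Rabs C)).
  { destruct (Rle_or_lt (u y) 0). nra. pose proof (Rabs_pos C). nra. }
  nra.
Qed.

Lemma UA (d : nat) a (u : R -> R) C del : (10 <= d)%nat -> 0 < a -> 0 < del ->
 (forall y, 0 < y < del -> Rabs (u y - (1 - a * y ^ 2)) <= C * y ^ 4) ->
 (forall y, 0 < y < 1 -> is_derive u y (Derive u y)) ->
 (forall y, 0 < y < 1 -> is_derive (Derive u) y (Derive (Derive u) y)) ->
 (forall y, 0 < y < 1 -> ode_at (INR d) u y) ->
 forall y1, 0 < y1 < 1 -> (forall y, 0 < y <= y1 -> 0 < u y < 1) ->
 Derive u y1 < 0.
Proof.
  intros Hd Ha Hdel Has Du Du1 Hode y1 Hy1 Hpos.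
  assert (HD : 10 <= INR d) by (apply (le_INR 10 d) in Hd; simpl in Hd; lra).
  destruct (Rlt_or_le (Derive u y1) 0) as [ok|Hneg]; auto. exfalso.
  set (Q := fun y => - (Ef (d - 3) (d - 5) y * Derive u y)).
  set (dQ := fun y => - (Ef (d-3) (d-5) y * (INR (d-3) / y + INR (d-5) * y / (1 - y ^ 2)) * Derive u y +
      Ef (d-3) (d-5) y * Derive (Derive u) y)).
  assert (Hm : INR (d - 3) = INR d - 3) by (rewrite minus_INR; [simpl; ring | lia]).
  assert (Hn : INR (d - 5) = INR d - 5) by (rewrite minus_INR; [simpl; ring | lia]).
  assert (DQ : forall y, 0 < y < 1 -> is_derive Q y (dQ y)).
  { intros y Hy. unfold Q, dQ. apply (is_derive_opp (fun y => Ef (d-3) (d-5) y * Derive u y) y).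
    apply is_derive_mult'. apply Ef_deriv; auto. apply Du1; auto. }
  assert (PQ : forall y, 0 < y <= y1 -> 0 < dQ y).
  { intros y Hy. assert (Hy' : 0 < y < 1) by lra.
    pose proof (Ef_pos (d-3) (d-5) y Hy') as HE.
    pose proof (Hode y Hy') as Ho. unfold ode_at in Ho.
    pose proof (Hpos y Hy) as Hu.
    unfold dQ. rewrite Hm, Hn.
    set (E := Ef (d-3) (d-5) y) in *.
    set (u0 := u y) in *. set (u1 := Derive u y) in *. set (u2 := Derive (Derive u) y) in *.
    set (D := INR d) in *.
    assert (Hid : ((D - 3) / y + (D - 5) * y / (1 - y ^ 2)) * u1 + u2 =
       (y ^ 2 * (1 - y ^ 2) * u2 + ((D - 3) * y - 2 * y ^ 3) * u1 + (D - 2) * u0 * (1 - u0 ^ 2)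
        - (D - 2) * u0 * (1 - u0 ^ 2)) / (y ^ 2 * (1 - y ^ 2))).
    { field. split; nra. }
    rewrite Ho in Hid.
    assert (Hneg2 : ((D - 3) / y + (D - 5) * y / (1 - y ^ 2)) * u1 + u2 < 0).
    { rewrite Hid. unfold Rminus. rewrite Rplus_0_l.
      unfold Rdiv. rewrite Ropp_mult_distr_l_reverse. apply Ropp_lt_gt_0_contravar.
      apply Rmult_lt_0_compat. apply Rmult_lt_0_compat. nra. nra.
      apply Rinv_0_lt_compat. apply Rmult_lt_0_compat; nra. }
    replace (- (E * ((D - 3) / y + (D - 5) * y / (1 - y ^ 2)) * u1 + E * u2)) with
      (- (E * (((D - 3) / y + (D - 5) * y / (1 - y ^ 2)) * u1 + u2))) by ring.
    nra. }
  assert (Upos : forall y, 0 < y < y1 -> 0 < Derive u y).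
  { intros y Hy.
    assert (Q y < Q y1).
    { apply (incr Q dQ y y1); try lra.
      - intros x Hx. apply DQ. lra.
      - intros x Hx. eapply cont_of. apply DQ. lra.
      - intros x Hx. apply PQ. lra. }
    assert (HE := Ef_pos (d-3) (d-5) y1 ltac:(lra)).
    assert (HE' := Ef_pos (d-3) (d-5) y ltac:(lra)).
    unfold Q in H. nra. }
  assert (Hinc : forall y, 0 < y < y1 -> u y < u y1).
  { intros y Hy. apply (incr u (Derive u) y y1); try lra.
    - intros x Hx. apply Du. lra.
    - intros x Hx. eapply cont_of. apply Du. lra.
    - intros x Hx. apply Upos. lra. }
  assert (He : 0 < 1 - u y1) by (pose proof (Hpos y1 ltac:(lra)); lra).
  pose proof (Rabs_pos C) as HC0.
  set (t := (1 - u y1) / (2 * (a + Rabs C))).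
  assert (Ht : 0 < t) by (apply Rdiv_lt_0_compat; auto; lra).
  set (y := Rmin (Rmin (y1 / 2) (del / 2)) (Rmin t (1/2))).
  assert (Hy0 : 0 < y).
  { unfold y. repeat apply Rmin_glb_lt; lra. }
  assert (Hy2 : y <= y1 / 2) by (unfold y; eapply Rle_trans; apply Rmin_l).
  assert (Hy3 : y <= del / 2) by (unfold y; eapply Rle_trans; [apply Rmin_l| apply Rmin_r]).
  assert (Hy4 : y <= t) by (unfold y; eapply Rle_trans; [apply Rmin_r| apply Rmin_l]).
  assert (Hy5 : y <= 1/2) by (unfold y; eapply Rle_trans; apply Rmin_r).
  specialize (Hinc y ltac:(lra)).
  specialize (Has y ltac:(lra)).
  apply Rabs_le_between in Has.
  assert (HC := Rle_abs C).
  assert (y ^ 2 <= t) by nra.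
  assert (C * y ^ 4 <= Rabs C * y ^ 2).
  { assert (0 <= y ^ 2 <= 1) by (split; nra).
    replace (y ^ 4) with (y ^ 2 * y ^ 2) by ring.
    assert (C * (y^2*y^2) <= Rabs C * (y^2*y^2)) by (apply Rmult_le_compat_r; nra).
    assert (Rabs C * y^2 * y^2 <= Rabs C * y^2 * 1) by (apply Rmult_le_compat_l; nra).
    nra. }
  assert (t * (2 * (a + Rabs C)) = 1 - u y1).
  { unfold t. field. lra. }
  assert ((a + Rabs C) * y ^ 2 <= (a + Rabs C) * t) by (apply Rmult_le_compat_l; lra).
  nra.
Qed.

Lemma near0 a (u : R -> R) C del : 0 < a -> 0 < del ->
 (forall y, 0 < y < del -> Rabs (u y - (1 - a * y ^ 2)) <= C * y ^ 4) ->
 exists x0, 0 < x0 < 1 /\ forall y, 0 < y <= x0 -> 0 < u y < 1.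
Proof.
  intros Ha Hdel Has.
  pose proof (Rabs_pos C) as HC0. pose proof (Rle_abs C) as HC.
  set (t1 := a / (2 * (Rabs C + 1))).
  set (t2 := 1 / (2 * (a + Rabs C + 1))).
  assert (Ht1 : 0 < t1) by (apply Rdiv_lt_0_compat; lra).
  assert (Ht2 : 0 < t2) by (apply Rdiv_lt_0_compat; lra).
  assert (E1 : t1 * (2 * (Rabs C + 1)) = a) by (unfold t1; field; lra).
  assert (E2 : t2 * (2 * (a + Rabs C + 1)) = 1) by (unfold t2; field; lra).
  exists (Rmin (Rmin (del / 2) (1/2)) (Rmin t1 t2)).
  assert (M1 := Rmin_l (Rmin (del / 2) (1/2)) (Rmin t1 t2)).
  assert (M2 := Rmin_r (Rmin (del / 2) (1/2)) (Rmin t1 t2)).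
  assert (M3 := Rmin_l (del / 2) (1/2)). assert (M4 := Rmin_r (del / 2) (1/2)).
  assert (M5 := Rmin_l t1 t2). assert (M6 := Rmin_r t1 t2).
  assert (0 < Rmin (Rmin (del / 2) (1/2)) (Rmin t1 t2)) by (repeat apply Rmin_glb_lt; lra).
  split; [lra|].
  intros y Hy.
  specialize (Has y ltac:(lra)). apply Rabs_le_between in Has.
  assert (Y1 : 0 < y <= 1/2) by lra.
  assert (Y2 : y <= t1) by lra. assert (Y3 : y <= t2) by lra.
  assert (Q1 : C * y ^ 4 <= Rabs C * y ^ 2 * y ^ 2).
  { replace (y ^ 4) with (y ^ 2 * y ^ 2) by ring.
    assert (C * (y^2*y^2) <= Rabs C * (y^2*y^2)) by (apply Rmult_le_compat_r; nra). nra. }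
  assert (Q2 : Rabs C * y ^ 2 <= Rabs C * t1).
  { apply Rmult_le_compat_l; nra. }
  assert (Q3 : (a + Rabs C) * y ^ 2 <= (a + Rabs C) * t2).
  { apply Rmult_le_compat_l; nra. }
  assert (Q4 : Rabs C * y ^ 2 * y ^ 2 <= Rabs C * y ^ 2) by (assert (y^2 <= 1) by nra;
     assert (0 <= Rabs C * y ^ 2) by nra; nra).
  split.
  - nra.
  - assert (Rabs C * t1 < a) by nra.
    assert (Rabs C * y ^ 2 * y ^ 2 < a * y ^ 2).
    { assert (0 < y ^ 2) by nra.
      apply Rmult_lt_compat_r; auto. lra. }
    nra.
Qed.

Lemma Dh_lem (u : R -> R) y : is_derive u y (Derive u y) ->
  is_derive (fun y => y ^ 2 * u y) y (y * (y * Derive u y + 2 * u y)).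
Proof.
  intros H. auto_derive. exists (Derive u y); auto.
  change (fun x => u x) with u. ring.
Qed.

Theorem lemma1 (d : nat) (a : R) (u : R -> R) :
  (10 <= d)%nat -> 0 < a -> is_sol (INR d) a u ->
  exists L : R,
    filterlim u (at_left 1) (locally L) /\
    0 < L /\
    (forall x y, 0 <= x -> x < y -> y < 1 -> u y < u x) /\
    (forall y, 0 <= y < 1 -> L < u y).
Proof.
  intros Hd Ha [Hd1 [Hd2 [Hode [H0 [C [del [Hdel Has]]]]]]].
  assert (Du : forall y, 0 < y < 1 -> is_derive u y (Derive u y)).
  { intros; apply Derive_correct; auto. }
  assert (Du1 : forall y, 0 < y < 1 -> is_derive (Derive u) y (Derive (Derive u) y)).
  { intros; apply Derive_correct; auto. }
  destruct (near0 a u C del Ha Hdel Has) as [x0 [Hx0 Hnear]].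
  set (E := fun x => 0 < x < 1 /\ forall y, 0 < y <= x -> 0 < u y < 1).
  destruct (completeness E) as [m [Hub Hlub]].
  { exists 1. intros x [Hx _]. lra. }
  { exists x0. split; auto. }
  assert (Hm0 : x0 <= m) by (apply Hub; split; auto).
  assert (Hm1 : m <= 1) by (apply Hlub; intros x [Hx _]; lra).
  assert (Below : forall y, 0 < y < m -> 0 < u y < 1).
  { intros y Hy.
    assert (~ is_upper_bound E y) by (intros Hc; specialize (Hlub y Hc); lra).
    apply not_all_ex_not in H. destruct H as [x Hx].
    apply imply_to_and in Hx. destruct Hx as [[Hx1 Hx2] Hx3].
    apply Hx2. lra. }
  assert (All : forall y, 0 < y < 1 -> 0 < u y < 1).
  { destruct (Rlt_or_le m 1) as [Hm|Hm]; [|intros; apply Below; lra].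
    exfalso.
    assert (Gp : forall y, 0 < y < m -> 0 < y * Derive u y + 2 * u y).
    { intros y Hy. apply (GA d a u C del); auto. lra.
      intros z Hz. apply Below. lra. }
    assert (Un : forall y, 0 < y < m -> Derive u y < 0).
    { intros y Hy. apply (UA d a u C del); auto. lra.
      intros z Hz. apply Below. lra. }
    assert (A1 : (m/2) ^ 2 * u (m/2) < m ^ 2 * u m).
    { apply (incr (fun y => y ^ 2 * u y) (fun y => y * (y * Derive u y + 2 * u y))); try lra.
      - intros x Hx. apply Dh_lem, Du. lra.
      - intros x Hx. eapply cont_of. apply Dh_lem, Du. lra.
      - intros x Hx. apply Rmult_lt_0_compat. lra. apply Gp. lra. }
    assert (A2 : - u (m/2) < - u m).
    { apply (incr (fun y => - u y) (fun y => - Derive u y)); try lra.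
      - intros x Hx. apply (is_derive_opp u x). apply Du. lra.
      - intros x Hx. eapply cont_of. apply (is_derive_opp u x). apply Du. lra.
      - intros x Hx. specialize (Un x ltac:(lra)). lra. }
    assert (Hum : 0 < u (m/2) < 1) by (apply Below; lra).
    assert (Hp : 0 < u m < 1).
    { split; [|lra]. assert (0 < (m/2)^2 * u (m/2)).
      { apply Rmult_lt_0_compat; [nra|lra]. }
      assert (0 < m ^ 2 * u m) by lra. 
      destruct (Rle_or_lt (u m) 0); auto. assert (m^2 * u m <= 0) by nra. lra. }
    assert (Hc : continuity_pt u m) by (eapply cont_of; apply Du; lra).
    unfold continuity_pt, continue_in, limit1_in, limit_in in Hc. simpl in Hc.
    unfold R_dist in Hc.
    destruct (Hc (Rmin (u m) (1 - u m))) as [al [Hal Hc2]].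
    { apply Rmin_glb_lt; lra. }
    set (x := Rmin (m + al / 2) ((m + 1) / 2)).
    assert (X1 : x <= m + al / 2) by apply Rmin_l.
    assert (X2 : x <= (m + 1) / 2) by apply Rmin_r.
    assert (X3 : m < x) by (apply Rmin_glb_lt; lra).
    assert (E x).
    { split. split; lra.
      intros y Hy. destruct (Rlt_or_le y m) as [Hy1|Hy1]. apply Below; lra.
      destruct (Req_dec y m) as [->|Hne]; auto.
      assert (Hya : Rabs (y - m) < al) by (rewrite Rabs_right; lra).
      assert (Hd' := Hc2 y (conj (conj I (not_eq_sym Hne)) Hya)).
      apply Rabs_def2 in Hd'.
      assert (Q1 := Rmin_l (u m) (1 - u m)). assert (Q2 := Rmin_r (u m) (1 - u m)).
      lra. }
    specialize (Hub x H). lra. }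
  assert (Gp : forall y, 0 < y < 1 -> 0 < y * Derive u y + 2 * u y).
  { intros y Hy. apply (GA d a u C del); auto. intros z Hz. apply All. lra. }
  assert (Un : forall y, 0 < y < 1 -> Derive u y < 0).
  { intros y Hy. apply (UA d a u C del); auto. intros z Hz. apply All. lra. }
  assert (Mono : forall x y, 0 <= x -> x < y -> y < 1 -> u y < u x).
  { intros x y Hx Hxy Hy.
    destruct (Req_dec x 0) as [->|Hx0'].
    - rewrite H0. apply All. lra.
    - assert (- u x < - u y); [|lra].
      apply (incr (fun y => - u y) (fun y => - Derive u y)); try lra.
      + intros z Hz. apply (is_derive_opp u z). apply Du. lra.
      + intros z Hz. eapply cont_of. apply (is_derive_opp u z). apply Du. lra.
      + intros z Hz. specialize (Un z ltac:(lra)). lra. }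
  set (c := u (1/2) / 4).
  assert (Hc : 0 < c) by (unfold c; pose proof (All (1/2) ltac:(lra)); lra).
  assert (Lb : forall y, 0 <= y < 1 -> c <= u y).
  { intros y Hy. assert (Hh : 0 < u (1/2)) by (apply All; lra).
    destruct (Rlt_or_le y (1/2)) as [Hy1|Hy1].
    - destruct (Req_dec y 0) as [->|Hy0]; [rewrite H0; pose proof (All (1/2) ltac:(lra)); unfold c; lra|].
      pose proof (Mono y (1/2) ltac:(lra) Hy1 ltac:(lra)). unfold c; lra.
    - destruct (Req_dec y (1/2)) as [->|Hy0]; [unfold c; lra|].
      assert ((1/2) ^ 2 * u (1/2) < y ^ 2 * u y).
      { apply (incr (fun y => y ^ 2 * u y) (fun y => y * (y * Derive u y + 2 * u y))); try lra.
        - intros x Hx. apply Dh_lem, Du. lra.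
        - intros x Hx. eapply cont_of. apply Dh_lem, Du. lra.
        - intros x Hx. apply Rmult_lt_0_compat. lra. apply Gp. lra. }
      assert (0 < u y) by (apply All; lra).
      assert (y ^ 2 * u y <= u y) by (assert (y^2 <= 1) by nra; nra).
      unfold c. lra. }
  set (W := fun z => exists y, 0 <= y < 1 /\ z = - u y).
  destruct (completeness W) as [M [HubW HlubW]].
  { exists (- c). intros z [y [Hy ->]]. specialize (Lb y Hy). lra. }
  { exists (- u 0). exists 0. split; auto; lra. }
  assert (HMc : M <= - c).
  { apply HlubW. intros z [y [Hy ->]]. specialize (Lb y Hy). lra. }
  assert (HL : forall y, 0 <= y < 1 -> - M <= u y).
  { intros y Hy. assert (- u y <= M) by (apply HubW; exists y; split; auto). lra. }
  exists (- M). split; [|split; [lra|split; [exact Mono|]]].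
  - apply filterlim_locally. intros eps.
    assert (Hex : exists y0, 0 <= y0 < 1 /\ M - eps < - u y0).
    { apply NNPP. intros Hn.
      assert (is_upper_bound W (M - eps)).
      { intros z [y [Hy ->]]. destruct (Rle_or_lt (- u y) (M - eps)) as [h|h]; auto.
        exfalso. apply Hn. exists y. split; auto. }
      specialize (HlubW _ H). destruct eps as [e He]; simpl in *. lra. }
    destruct Hex as [y0 [Hy0 Hy0e]].
    unfold at_left, within, locally.
    assert (Hdl : 0 < 1 - y0) by lra.
    exists (mkposreal _ Hdl). intros y Hb Hy1. simpl in Hb.
    unfold ball in Hb; simpl in Hb; unfold AbsRing_ball, abs, minus, plus, opp in Hb; simpl in Hb.
    apply Rabs_def2 in Hb.
    unfold ball; simpl; unfold AbsRing_ball, abs, minus, plus, opp; simpl.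
    assert (u y < u y0) by (apply Mono; lra).
    assert (- M <= u y) by (apply HL; lra).
    apply Rabs_def1; lra.
  - intros y Hy. assert (u ((y + 1) / 2) < u y) by (apply Mono; lra).
    assert (- M <= u ((y + 1) / 2)) by (apply HL; lra). lra.
Qed.
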